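(* Let $\mathcal{H}$ be a Hilbert space of finite dimension $d\geq 2$ with orthonormal basis $\{\phi_k\}_{k=1}^d$, and let $\mathcal{I}$ be the instrument on $\Omega=\{0,1\}$ given by $\mathcal{I}_\omega(T)=L_\omega^*TL_\omega$ with $L_0=|\phi_d\rangle\langle\phi_d|$ and $L_1=\sum_{k=1}^{d-1}|\phi_{k+1}\rangle\langle\phi_k|$. Then $\mathsf{A}^\mathcal{I}_1\prec\mathsf{A}^\mathcal{I}_2\prec\cdots\prec\mathsf{A}^\mathcal{I}_{d-1}\simeq\mathsf{A}^\mathcal{I}_d\simeq\cdots$, and hence $\mathrm{sat}(\mathcal{I})=d-1$.
   Context: For finite-outcome observables (maps into positive operators summing to $\mathbb{1}$), $\mathsf{A}\preceq\mathsf{B}$ means there is $\kappa:\Omega_\mathsf{A}\times\Omega_\mathsf{B}\to[0,1]$ with $\sum_\omega\kappa(\omega|\omega')=1$ and $\mathsf{A}(\omega)=\sum_{\omega'}\kappa(\omega|\omega')\mathsf{B}(\omega')$; $\mathsf{A}\simeq\mathsf{B}$ means both directions hold; $\mathsf{A}\prec\mathsf{B}$ means $\mathsf{A}\preceq\mathsf{B}$ but not $\mathsf{B}\preceq\mathsf{A}$. $\mathsf{A}^\mathcal{I}_n(\omega_1,\ldots,\omega_n)=\mathcal{I}_{\omega_1}\circ\cdots\circ\mathcal{I}_{\omega_n}(\mathbb{1})$ on $\Omega^n$. The saturation step $\mathrm{sat}(\mathcal{I})$ is the smallest positive integer $n$ with $\mathsf{A}^\mathcal{I}_n\simeq\mathsf{A}^\mathcal{I}_{n+1}$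 ($\infty$ if none). *)

(* Defs.v *)
From HB Require Import structures.
From mathcomp Require Import all_boot all_order all_algebra.
Set Implicit Arguments. Unset Strict Implicit. Unset Printing Implicit Defensive.
Import Order.TTheory GRing.Theory Num.Theory.
Local Open Scope ring_scope.

Section Defs.
Variable C : numClosedFieldType.

Definition adj (m n : nat) (M : 'M[C]_(m, n)) : 'M[C]_(n, m) := (map_mx Num.conj M)^T.

Definition postproc (d : nat) (TA TB : finType)
    (A : TA -> 'M[C]_d) (B : TB -> 'M[C]_d) : Prop :=
  exists kappa : TA -> TB -> C,
    [/\ (forall a b, 0 <= kappa a b <= 1),
        (forall b, \sum_a kappa a b = 1) &
        (forall a, A a = \sum_b kappa a b *: B b)].

Definition obs_equiv d (TA TB : finType) (A : TA -> 'M[C]_d) (B : TB -> 'M[C]_d) :=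
  postproc A B /\ postproc B A.

Definition obs_strict d (TA TB : finType) (A : TA -> 'M[C]_d) (B : TB -> 'M[C]_d) :=
  postproc A B /\ ~ postproc B A.

Definition seq_obs d (Om : finType) (I : Om -> 'M[C]_d -> 'M[C]_d) (n : nat)
    (w : n.-tuple Om) : 'M[C]_d :=
  foldr (fun o T => I o T) 1%:M (val w).
Arguments seq_obs {d Om} I n w.


Definition is_sat d (Om : finType) (I : Om -> 'M[C]_d -> 'M[C]_d) (n : nat) : Prop :=
  [/\ 0 < n,
      obs_equiv (seq_obs I n) (seq_obs I n.+1) &
      forall m, 0 < m -> obs_equiv (seq_obs I m) (seq_obs I m.+1) -> n <= m]%N.

Definition kraus_instr d (Om : finType) (L : Om -> 'M[C]_d) (w : Om) (T : 'M[C]_d) :=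
  adj (L w) *m T *m L w.

(* standard basis vector e_k (0-based) and phi_k = U e_k *)
Definition std_vec d (k : nat) : 'cV[C]_d := \col_(i < d) ((i : nat) == k)%:R.
End Defs.
Arguments std_vec C d k : clear implicits.

Arguments seq_obs {C d Om} I n w.

(* Main.v *)
Require Import Defs.
From HB Require Import structures.
From mathcomp Require Import all_boot all_order all_algebra.
From mathcomp Require Import zify.
Import Order.TTheory GRing.Theory Num.Theory.
Local Open Scope ring_scope.
Set Implicit Arguments. Unset Strict Implicit.

Section S.
Variable C : numClosedFieldType.

Lemma adjM p q r (A : 'M[C]_(p,q)) (B : 'M[C]_(q,r)) : adj (A *m B) = adj B *m adj A.
Proof. by rewrite /adj map_mxM trmx_mul. Qed.

Lemma adjK p q (A : 'M[C]_(p,q)) : adj (adj A) = A.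
Proof. by apply/matrixP => i j; rewrite !mxE conjCK. Qed.

Lemma adj1 n : adj (1%:M : 'M[C]_n) = 1%:M.
Proof. by apply/matrixP => i j; rewrite !mxE rmorphMn rmorph1 eq_sym. Qed.

Lemma adjD p q (A B : 'M[C]_(p,q)) : adj (A + B) = adj A + adj B.
Proof. by apply/matrixP => i j; rewrite !mxE rmorphD. Qed.

Lemma sum_delta (T : finType) (F : T -> C) (c : T) :
  \sum_b F b * (c == b)%:R = F c.
Proof.
rewrite (bigD1 c) //= eqxx mulr1 big1 ?addr0 // => b /negbTE.
by rewrite eq_sym => ->; rewrite mulr0.
Qed.

Definition Dm n (p : nat -> bool) : 'M[C]_n := \matrix_(i, j) ((i == j) && p i)%:R.

Lemma postproc_ext n (TA TB : finType) (A A' : TA -> 'M[C]_n) (B B' : TB -> 'M[C]_n) :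
  (forall a, A a = A' a) -> (forall b, B b = B' b) -> postproc A B -> postproc A' B'.
Proof.
move=> HA HB [k [k1 k2 k3]]; exists k; split => // a.
by rewrite -HA k3; apply: eq_bigr => b _; rewrite HB.
Qed.

Lemma postproc_conj n (TA TB : finType) (A : TA -> 'M[C]_n) (B : TB -> 'M[C]_n) (P Q : 'M[C]_n) :
  postproc A B -> postproc (fun a => P *m A a *m Q) (fun b => P *m B b *m Q).
Proof.
move=> [k [k1 k2 k3]]; exists k; split => // a.
rewrite k3 mulmx_sumr mulmx_suml; apply: eq_bigr => b _.
by rewrite -scalemxAr -scalemxAl.
Qed.

Variable m : nat.
Local Notation N := m.+1.

Definition Dobs (T : finType) (f : 'I_N -> T) (a : T) : 'M[C]_N :=
  Dm N (fun k => f (inord k) == a).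

Lemma Dobs_diag (T : finType) (f : 'I_N -> T) a i j :
  Dobs f a i j = ((i == j) && (f i == a))%:R.
Proof. by rewrite mxE inord_val. Qed.

Lemma post_pos (TA TB : finType) (fA : 'I_N -> TA) (fB : 'I_N -> TB) :
  (forall i j, fB i = fB j -> fA i = fA j) ->
  postproc (Dobs fA) (Dobs fB).
Proof.
move=> H.
pose g b := if [pick i | fB i == b] is Some i then fA i else fA ord0.
have Hg : forall i, g (fB i) = fA i.
  move=> i; rewrite /g; case: pickP => [i' /eqP Hi'|H0]; first exact: H.
  by have := H0 i; rewrite eqxx.
exists (fun a b => (g b == a)%:R); split.
- by move=> a b; case: (g b == a); rewrite ?ler01 ?lexx.
- move=> b; rewrite (bigD1 (g b)) //= eqxx big1 ?addr0 // => a /negbTE.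
  by rewrite eq_sym => ->.
- move=> a; apply/matrixP => i j; rewrite summxE Dobs_diag.
  under eq_bigr => b _ do rewrite mxE Dobs_diag.
  case: (i =P j) => [->|_] /=.
  + under eq_bigr => b _ do rewrite /=.
    by rewrite sum_delta Hg.
  + by rewrite big1 // => b _; rewrite mulr0.
Qed.

Lemma post_neg (TA TB : finType) (fA : 'I_N -> TA) (fB : 'I_N -> TB) i j :
  fB i = fB j -> fA i <> fA j -> ~ postproc (Dobs fA) (Dobs fB).
Proof.
move=> Hb Ha [k [_ _ k3]].
have E := k3 (fA i).
have Ei := f_equal (fun M : 'M[C]_N => M i i) E; have Ej := f_equal (fun M : 'M[C]_N => M j j) E.
have sumE : forall x, (\sum_b k (fA i) b *: Dobs fB b) x x = k (fA i) (fB x).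
  move=> x; rewrite summxE.
  under eq_bigr => b _ do rewrite mxE Dobs_diag eqxx /=.
  by rewrite sum_delta.
move: Ei Ej => /=; rewrite !sumE !Dobs_diag !eqxx /= Hb => <-.
have -> : (fA j == fA i) = false by apply/eqP => /esym.
by move/eqP; rewrite eq_sym oner_eq0.
Qed.

Lemma Dm_ext (p q : nat -> bool) : (forall k, k < N -> p k = q k)%N -> Dm N p = Dm N q.
Proof. by move=> H; apply/matrixP => i j; rewrite !mxE H. Qed.

Local Notation e k := (std_vec C N k).

Lemma eadjE a b (i j : 'I_N) : (e a *m adj (e b)) i j = ((i == a :> nat) && (j == b :> nat))%:R.
Proof. by rewrite !mxE big_ord1 !mxE rmorph_nat -natrM mulnb. Qed.

Definition Lp (w : 'I_2) : 'M[C]_N :=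
  if w == 0 then e m *m adj (e m) else \sum_(0 <= k < m) e k.+1 *m adj (e k).

Lemma sum_ord_eq n (c : nat) (q : nat -> bool) :
  \sum_(b < n) ((b == c :> nat) && q b)%:R = ((c < n)%N && q c)%:R :> C.
Proof.
case: (ltnP c n) => hc /=.
  rewrite (bigD1 (Ordinal hc)) //= eqxx /= big1 ?addr0 // => b hb.
  case: eqP => //= hbc; move: hb; suff -> : b = Ordinal hc by rewrite eqxx.
  by apply: val_inj.
rewrite big1 // => b _; case: eqP => //= hbc.
by move: (ltn_ord b); rewrite hbc ltnNge hc.
Qed.

Lemma Lp0E i j : Lp 0 i j = ((i == m :> nat) && (j == m :> nat))%:R.
Proof. by rewrite /Lp eqxx eadjE. Qed.

Lemma Lp1E i j : Lp 1 i j = (i == j.+1 :> nat)%:R.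
Proof.
rewrite /Lp /= summxE big_mkord.
under eq_bigr => k _ do rewrite eadjE andbC (eq_sym (nat_of_ord j)).
rewrite (sum_ord_eq _ _ (fun x => nat_of_ord i == x.+1)); case: ltnP => //= hj.
have -> : (j : nat) = m by apply/eqP; rewrite eqn_leq hj -ltnS ltn_ord.
by case: eqP => // hi; move: (ltn_ord i); rewrite hi ltnn.
Qed.

Lemma kraus_entry (L : 'M[C]_N) (r : nat -> nat -> bool) (p : nat -> bool) :
  (forall a b : 'I_N, L a b = (r a b)%:R) -> forall i j,
  (adj L *m Dm N p *m L) i j = \sum_(b < N) ((r b i && p b) && r b j)%:R.
Proof.
move=> HL i j; rewrite mxE; apply: eq_bigr => b _.
rewrite mxE (bigD1 b) //= big1 => [|a hab]; last first.
  by rewrite [Dm _ _ _ _]mxE (negbTE hab) mulr0.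
by rewrite addr0 !mxE HL HL eqxx rmorph_nat -!natrM !mulnb.
Qed.

Lemma kraus_step (o : 'I_2) (p : nat -> bool) :
  kraus_instr Lp o (Dm N p) =
  Dm N (fun k => if o == 0 then (k == m) && p k else (k < m)%N && p k.+1).
Proof.
apply/matrixP => i j; rewrite /kraus_instr.
have [-> | ] := eqVneq o 0.
  rewrite (@kraus_entry _ (fun a b => (a == m) && (b == m))) => [|a b]; last exact: Lp0E.
  rewrite mxE /=.
  transitivity (\sum_(b < N) ((b == m :> nat) && ((i == m :> nat) && p b && (j == m :> nat)))%:R : C).
    by apply: eq_bigr => b _; congr (_%:R); case: (nat_of_ord b == m).
  rewrite (sum_ord_eq _ _ (fun b => (i == m :> nat) && p b && (j == m :> nat))).
  rewrite ltnSn /=; congr (_%:R).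
  have [hi|hi] := eqVneq (nat_of_ord i) m; have [hj|hj] := eqVneq (nat_of_ord j) m;
    rewrite /= ?andbF ?andbT //.
  - have -> : i = j by apply: val_inj; rewrite /= hi hj.
    by rewrite eqxx hj.
  - by case: eqP => // hij; move: hj; rewrite -hij hi eqxx.
move=> ho.
have -> : o = 1.
  apply: val_inj; move: ho; case: o => [[|[|k]]] //= hk.
rewrite (@kraus_entry _ (fun a b => a == b.+1)) => [|a b]; last exact: Lp1E.
rewrite mxE /=.
under eq_bigr => b _ do rewrite -andbA.
rewrite (sum_ord_eq _ _ (fun b => p b && (b == j.+1))) ltnS eqSS; congr (_%:R).
case: (i =P j) => [->|hij] /=; first by rewrite eqxx andbT.
by case: eqP => [hij'|]; rewrite ?andbF //; case: hij; apply: val_inj.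
Qed.

Definition outs n k : seq 'I_2 :=
  nseq (minn n (m - k)) (1 : 'I_2) ++ nseq (n - minn n (m - k))%N (0 : 'I_2).

Lemma size_outs n k : size (outs n k) = n.
Proof. by rewrite /outs size_cat !size_nseq subnKC // geq_minl. Qed.

Lemma outsS n k : (k <= m)%N ->
  outs n.+1 k = if (k < m)%N then 1 :: outs n k.+1 else 0 :: outs n k.
Proof.
move=> hk; rewrite /outs; case: ltnP => hk'.
  by rewrite -subnSK // minnSS subSS.
have -> : (m - k = 0)%N by apply/eqP; rewrite subn_eq0.
by rewrite !minn0 !subn0.
Qed.

Lemma foldr_Lp (s : seq 'I_2) :
  foldr (fun o T => kraus_instr Lp o T) 1%:M s = Dm N (fun k => s == outs (size s) k).
Proof.
elim: s => [|o s IH] /=.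
  apply/matrixP => i j; rewrite !mxE /outs min0n /= andbT.
  by case: (i == j).
rewrite IH kraus_step; apply: Dm_ext => k hk.
have ho1 : o = 0 \/ o = 1.
  case: o => [[|[|k']]] hk'; [left | right | by []]; exact: val_inj.
rewrite outsS //; case: ltnP => hk'; rewrite eqseq_cons;
  case: ho1 => -> //=.
- by rewrite ltn_eqF.
- by rewrite (_ : k = m) ?eqxx //; apply/eqP; rewrite eqn_leq hk' -ltnS hk.
Qed.

Lemma outs_min n i j : outs n i = outs n j -> minn n (m - i) = minn n (m - j).
Proof.
move/(congr1 (count (pred1 (1 : 'I_2)))); rewrite /outs !count_cat !count_nseq /=.
by rewrite !mul1n !mul0n !addn0.
Qed.

Definition outT n (k : 'I_N) : n.-tuple 'I_2 := @Tuple n _ (outs n k) (introT eqP (size_outs n k)).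

Variable U : 'M[C]_N.
Hypothesis hU : adj U *m U = 1%:M.

Lemma UadjU : U *m adj U = 1%:M.
Proof. exact: mulmx1C hU. Qed.

Lemma cancelU p (A : 'M[C]_(p, N)) : A *m adj U *m U = A.
Proof. by rewrite -mulmxA hU mulmx1. Qed.

Lemma cancelU' p (A : 'M[C]_(p, N)) : A *m U *m adj U = A.
Proof. by rewrite -mulmxA UadjU mulmx1. Qed.

Lemma foldr_conj (L : 'I_2 -> 'M[C]_N) :
  (forall o, L o = U *m Lp o *m adj U) -> forall s,
  foldr (fun o T => kraus_instr L o T) 1%:M s =
  U *m foldr (fun o T => kraus_instr Lp o T) 1%:M s *m adj U.
Proof.
move=> HL; elim => [|o s IH] /=; first by rewrite mulmx1 UadjU.
by rewrite IH /kraus_instr HL !adjM adjK !mulmxA !cancelU.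
Qed.

Lemma lift_post (TA TB : finType) (fA : 'I_N -> TA) (fB : 'I_N -> TB) :
  postproc (Dobs fA) (Dobs fB) <->
  postproc (fun a => U *m Dobs fA a *m adj U) (fun b => U *m Dobs fB b *m adj U).
Proof.
split; first exact: postproc_conj.
move/(postproc_conj (adj U) U); apply: postproc_ext => a;
  by rewrite !mulmxA hU mul1mx cancelU.
Qed.
End S.

Theorem mainTheorem6 (C : numClosedFieldType) (d : nat) (hd : (2 <= d)%N)
    (U : 'M[C]_d) (hU : adj U *m U = 1%:M) :
  let phi := fun k : nat => U *m std_vec C d k in
  let L := fun w : 'I_2 =>
    if w == 0 then phi d.-1 *m adj (phi d.-1)
    else \sum_(0 <= k < d.-1) phi k.+1 *m adj (phi k) in
  let I := kraus_instr L in
  (forall n, (1 <= n)%N -> (n < d.-1)%N ->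
     obs_strict (seq_obs I n) (seq_obs I n.+1)) /\
  (forall n, (d.-1 <= n)%N -> obs_equiv (seq_obs I n) (seq_obs I n.+1)) /\
  is_sat I d.-1.
Proof.
case: d hd U hU => [|m] // hd U hU phi L I /=.
have hL : forall o, L o = U *m Lp C m o *m adj U.
  move=> o; rewrite /L /Lp /phi; case: (o == 0).
    by rewrite !adjM !mulmxA.
  rewrite mulmx_sumr mulmx_suml; apply: eq_bigr => k _.
  by rewrite !adjM !mulmxA.
have HA : forall n (w : n.-tuple 'I_2),
    seq_obs I n w = U *m Dobs C (outT n) w *m adj U.
  move=> n w; rewrite /seq_obs /I (foldr_conj hU hL) (foldr_Lp C m) size_tuple.
  congr (_ *m _ *m _); apply: (Dm_ext C) => k hk.
  by rewrite -val_eqE /= inordK // eq_sym.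
have Hpos : forall n, postproc (seq_obs I n) (seq_obs I n.+1).
  move=> n; apply: (postproc_ext (A := fun w => U *m Dobs C (outT n) w *m adj U)
     (B := fun w => U *m Dobs C (outT n.+1) w *m adj U)) => [w|w|]; rewrite ?HA //.
  apply/lift_post => //; apply: (post_pos C) => i j /(congr1 val) /= /outs_min H.
  apply: val_inj => /=; rewrite /outs.
  have -> : minn n (m - i) = minn n (m - j) by lia.
  by [].
have Hneg : forall n, (1 <= n)%N -> (n < m)%N ->
    ~ postproc (seq_obs I n.+1) (seq_obs I n).
  move=> n h1 h2 H.
  have : postproc (fun w => U *m Dobs C (outT n.+1) w *m adj U)
                  (fun w => U *m Dobs C (outT n) w *m adj U).
    by apply: (postproc_ext _ _ H) => w; rewrite HA.
  move/(lift_post hU).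
  have hj : (m - n < m.+1)%N by lia.
  apply: (post_neg (i := ord0) (j := Ordinal hj)).
    apply: val_inj => /=; rewrite /outs /=.
    have -> : minn n (m - 0) = minn n (m - (m - n)) by lia.
    by [].
  move=> /(congr1 val) /= /outs_min /=; lia.
have Heq : forall n, (m <= n)%N -> postproc (seq_obs I n.+1) (seq_obs I n).
  move=> n hn; apply: (postproc_ext (A := fun w => U *m Dobs C (outT n.+1) w *m adj U)
     (B := fun w => U *m Dobs C (outT n) w *m adj U)) => [w|w|]; rewrite ?HA //.
  apply/lift_post => //; apply: (post_pos C) => i j /(congr1 val) /= /outs_min H.
  have hi := ltn_ord i; have hj := ltn_ord j.
  have -> : i = j by apply: ord_inj; lia.
  by [].
split; [|split].
- move=> n h1 h2; split; [exact: Hpos | exact: Hneg].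
- move=> n hn; split; [exact: Hpos | exact: Heq].
- split.
  + by move: hd; rewrite ltnS.
  + split; [exact: Hpos | exact: Heq].
  + move=> k hk [_ Hk]; rewrite leqNgt; apply/negP => hkm.
    exact: (Hneg k hk hkm).
Qed.
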